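(* Let $V$ be a finite vocabulary, each word $x\in V$ having a nonempty perturbation set $P_x\subseteq V$. For words $x,x'$ write $n_x=|P_x|$, $n_{x'}=|P_{x'}|$ and $n_{x,x'}=|P_x\cap P_{x'}|$. For $X=x_1,\ldots,x_L\in V^L$ let $\Pi_X$ be the probability mass function on $V^L$ with $\Pi_X(Z)=\prod_{i=1}^L\mathbb{I}\{z_i\in P_{x_i}\}/|P_{x_i}|$. Then for any sentences $X=x_1,\ldots,x_L$ and $X'=x'_1,\ldots,x'_L$ in $V^L$ and any $\lambda\ge0$, $$\sum_{Z\in V^L}\big(\lambda\Pi_X(Z)-\Pi_{X'}(Z)\big)_+=\lambda\Big[1-\prod_{j\in[L],x_j\ne x'_j}\frac{n_{x_j,x'_j}}{n_{x_j}}\Big]+\Big[\prod_{j\in[L],x_j\ne x'_j}\frac{n_{x_j,x'_j}}{n_{x_j}}\Big]\Big(\lambda-\prod_{j\in[L],x_j\ne x'_j}\frac{n_{x_j}}{n_{x'_j}}\Big)_+,$$ where $(s)_+=\max(s,0)$. Consequently, if $x'_j\in S_{x_j}$ for all $j$ and $|P_x|=|P_{x'}|$ for every word $x$ and every $x'\in S_x$ (where $S_x\subseteq V$ are given synonym sets), then $$\sum_{Z\in V^L}\big(\lambda\Pi_X(Z)-\Pi_{X'}(Z)\big)_+=\lambda\Big[1-\prod_{j\in[L],x_j\ne x'_j}\frac{n_{x_j,x'_j}}{n_{x_j}}\Big]+\Big[\prod_{j\in[L],x_j\ne x'_j}\frac{n_{x_j,x'_j}}{n_{x_j}}\Big](\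lambda-1)_+.$$
   Context: Empty products equal $1$. *)

(* Defs.v *)
From HB Require Import structures.
From mathcomp Require Import all_boot all_order all_algebra.
Set Implicit Arguments. Unset Strict Implicit. Unset Printing Implicit Defensive.
Import Order.TTheory GRing.Theory Num.Theory.
Local Open Scope ring_scope.

Definition PiX (R : fieldType) (V : finType) (P : V -> {set V}) (L : nat)
    (X Z : {ffun 'I_L -> V}) : R :=
  \prod_(i < L) ((Z i \in P (X i))%:R / (#|P (X i)|)%:R).

Definition pospart (R : realDomainType) (s : R) : R := Num.max s 0.

(* Main.v *)
Require Import Defs.
From HB Require Import structures.
From mathcomp Require Import all_boot all_order all_algebra.
Import Order.TTheory GRing.Theory Num.Theory.
Local Open Scope ring_scope.
From mathcomp Require Import ring.

Lemma card_fam (V : finType) L (F : 'I_L -> {set V}) :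
  #|[pred Z : {ffun 'I_L -> V} | [forall i, Z i \in F i]]| = (\prod_(i < L) #|F i|)%N.
Proof.
have := @card_family 'I_L (fun _ => V) (fun i => mem (F i)).
rewrite foldrE big_map big_enum /= => <-.
by apply: eq_card => Z; rewrite !inE.
Qed.

Lemma prod_ind (R : comPzRingType) L (b : 'I_L -> bool) :
  \prod_(i < L) (b i)%:R = ([forall i, b i])%:R :> R.
Proof.
case: (boolP [forall i, b i]) => [/forallP H|/forallPn [i Hi]].
  by rewrite big1 // => i _; rewrite H.
by rewrite (bigD1 i) //= (negbTE Hi) mul0r.
Qed.

Lemma PiXE (R : fieldType) (V : finType) (P : V -> {set V}) (L : nat) (X Z : {ffun 'I_L -> V}) :
  PiX R P X Z = ([forall i, Z i \in P (X i)])%:R / (\prod_(i < L) #|P (X i)|)%N%:R.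
Proof.
by rewrite /PiX big_split /= prod_ind prodfV natr_prod.
Qed.

Lemma sum_ind (R : pzRingType) (T : finType) (A : pred T) :
  \sum_(Z : T) (A Z)%:R = #|A|%:R :> R.
Proof.
rewrite (eq_bigr (fun Z => if A Z then 1 else 0)); last by move=> Z _; case: (A Z).
by rewrite -big_mkcond sumr_const.
Qed.

Lemma pos_mul (R : realDomainType) (c x : R) : 0 <= c -> c * pospart x = pospart (c * x).
Proof.
move=> hc; rewrite /pospart.
case: (lerP 0 x) => hx.
  rewrite !max_l ?mulr_ge0 //.
by rewrite mulr0 max_r // mulr_ge0_le0 // ltW.
Qed.

Lemma prod_cond_div (R : numFieldType) L (f g : 'I_L -> nat) (c : pred 'I_L) :
  (forall j, ~~ c j -> f j = g j) -> (forall j, g j != 0%N) ->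
  \prod_(j < L | c j) ((f j)%:R / (g j)%:R) = (\prod_(j < L) f j)%N%:R / (\prod_(j < L) g j)%N%:R :> R.
Proof.
move=> hfg hg; rewrite big_mkcond /=.
rewrite (eq_bigr (fun j => (f j)%:R / (g j)%:R)); last first.
  move=> j _; case: ifP => // /negbT /hfg ->; rewrite divff //.
  by rewrite pnatr_eq0.
by rewrite big_split /= prodfV !natr_prod.
Qed.

Lemma sum_fam (R : pzRingType) (V : finType) L (F : 'I_L -> {set V}) :
  \sum_(Z : {ffun 'I_L -> V}) ([forall i, Z i \in F i])%:R = (\prod_(i < L) #|F i|)%N%:R :> R.
Proof. by rewrite sum_ind card_fam. Qed.
Theorem lemma2 (R : realFieldType) (V : finType) (P : V -> {set V})
    (hP : forall x : V, P x != set0) (L : nat)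
    (X X' : {ffun 'I_L -> V}) (lam : R) (hlam : 0 <= lam) :
  let q := \prod_(j < L | X j != X' j)
             ((#|P (X j) :&: P (X' j)|)%:R / (#|P (X j)|)%:R) in
  (\sum_(Z : {ffun 'I_L -> V}) pospart (lam * PiX R P X Z - PiX R P X' Z)
     = lam * (1 - q)
       + q * pospart (lam - \prod_(j < L | X j != X' j)
                               ((#|P (X j)|)%:R / (#|P (X' j)|)%:R)))
  /\
  (forall S : V -> {set V},
     (forall x x', x' \in S x -> #|P x| = #|P x'|) ->
     (forall j : 'I_L, X' j \in S (X j)) ->
     \sum_(Z : {ffun 'I_L -> V}) pospart (lam * PiX R P X Z - PiX R P X' Z)
       = lam * (1 - q) + q * pospart (lam - 1)).
Proof.
move=> q.
have hn : forall x, #|P x| != 0%N.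
  by move=> x; rewrite cards_eq0 hP.
set N := (\prod_(i < L) #|P (X i)|)%N.
set N' := (\prod_(i < L) #|P (X' i)|)%N.
set M := (\prod_(i < L) #|P (X i) :&: P (X' i)|)%N.
have hN : (N%:R : R) != 0.
  by rewrite pnatr_eq0 /N prod_nat_seq_eq0 -all_predC; apply/allP => i _ /=; rewrite hn.
have hN' : (N'%:R : R) != 0.
  by rewrite pnatr_eq0 /N' prod_nat_seq_eq0 -all_predC; apply/allP => i _ /=; rewrite hn.
have hq : q = M%:R / N%:R.
  rewrite /q prod_cond_div // => j; rewrite negbK => /eqP ->; by rewrite setIid.
have hr : \prod_(j < L | X j != X' j) ((#|P (X j)|)%:R / (#|P (X' j)|)%:R) = N%:R / N'%:R :> R.
  rewrite prod_cond_div // => j; rewrite negbK => /eqP -> //.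
have key : \sum_(Z : {ffun 'I_L -> V}) pospart (lam * PiX R P X Z - PiX R P X' Z)
     = lam * (1 - q) + q * pospart (lam - N%:R / N'%:R).
  rewrite (eq_bigr (fun Z : {ffun 'I_L -> V} =>
     ([forall i, Z i \in P (X i)])%:R * (lam / N%:R)
     - ([forall i, Z i \in P (X i) :&: P (X' i)])%:R * (lam / N%:R)
     + ([forall i, Z i \in P (X i) :&: P (X' i)])%:R * pospart (lam / N%:R - 1 / N'%:R))); last first.
    move=> Z _; rewrite !PiXE -/N -/N'.
    have -> : [forall i, Z i \in P (X i) :&: P (X' i)] =
              [forall i, Z i \in P (X i)] && [forall i, Z i \in P (X' i)].
      apply/forallP/andP => [H|[/forallP H1 /forallP H2] i].
        by split; apply/forallP => i; have := H i; rewrite inE => /andP[].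
      by rewrite inE H1 H2.
    have hN0 : 0 < (N%:R : R) by rewrite lt0r hN ler0n.
    have hN0' : 0 < (N'%:R : R) by rewrite lt0r hN' ler0n.
    case: [forall i, Z i \in P (X i)]; case: [forall i, Z i \in P (X' i)] => /=.
    - by rewrite /= ?mulr0n ?mulr1n !(mul1r,mul0r,mulr0,subr0,sub0r,oppr0,addr0,add0r,subrr).
    - rewrite /= ?mulr0n ?mulr1n !(mul1r,mul0r,mulr0,subr0,sub0r,oppr0,addr0,add0r,subrr) /pospart max_l //.
      by rewrite mulr_ge0 // invr_ge0 ltW.
    - rewrite /= ?mulr0n ?mulr1n !(mul1r,mul0r,mulr0,subr0,sub0r,oppr0,addr0,add0r,subrr) /pospart max_r //.
      by rewrite oppr_le0 invr_ge0 ltW.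
    - by rewrite /= ?mulr0n ?mulr1n !(mul1r,mul0r,mulr0,subr0,sub0r,oppr0,addr0,add0r,subrr) /pospart maxxx.
  rewrite big_split /= sumrB -!mulr_suml !sum_fam -/N -/M.
  have E : pospart (lam - N%:R / N'%:R) = N%:R * pospart (lam / N%:R - 1 / N'%:R).
    rewrite pos_mul ?ler0n //; congr pospart; by field; rewrite hN hN'.
  rewrite hq E; field; by rewrite hN.
split; first by rewrite hr.
move=> S hS hX.
rewrite key.
suff -> : N = N' by rewrite divff.
by rewrite /N /N'; apply: eq_bigr => i _; apply: hS.
Qed.
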